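(* Consider the disclosure model described in the context. Let $d_F$ be a full-disclosure policy. Then $\Gamma(d_F)\ge\Gamma(d)$ for every Pareto efficient disclosure policy $d\in\mathcal{D}$. That is, full disclosure induces the highest expected emission among all efficient disclosure policies.
   Context: Emissions lie in $E=[0,\bar e]$ with $\bar e>0$. The firm's type $\theta\in\Theta=[\underline\theta,\bar\theta]$ is private information with a continuous density $f=F'$ on $\Theta$. The firm's profit is $\tilde\pi(\theta,e,\tilde e)$ with actual emission $e$ and market-perceived emission $\tilde e$; it is strictly increasing in $e$ and strictly decreasing in $\tilde e$. Standing assumptions: $\tilde\pi$ is continuous on $\Theta\times E\times E$ and $C^2$ on its interior; $\pi(\theta,e):=\tilde\pi(\theta,e,e)$ is strictly concave in $e$; and $\pi(\theta,0)<\pi(\theta,\bar e)$ for all $\theta$. A disclosure policy is a function $d:E\to E$ (a partition of $E$ into level sets). An emission $e$ is belief-compatible under $d$ if $e\ge e'$ whenever $d(e')=d(e)$; $\tilde E_d$ is the set of such levels. The type-$\theta$ firm chooses $e\in\tilde E_d$ maximizing $\pi(\theta,e)$. $\mathcal{D}$ is the set of policies for which the maximum is attained for every type. For $d\in\mathcal{D}$, $\pi_d(\theta)=\max_{e\in\tilde E_d}\pi(\theta,e)$, and $\gamma_d(\theta)$ is the lowest maximizer. Further, $\Pi(d)=\int_\Theta\pi_d\,dF$ and $\Gamma(d)=\int_\Theta\gamma_d\,dF$. A policy $d\in\mathcal{D}$ is Pareto efficient if there is no $d'\in\mathcal{D}$ with $\Pi(d')\ge\Pi(d)$ and $\Gamma(d')\le\Gamma(d)$,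 at least one strict. Let $\hat{\mathbf e}(\theta):=\arg\max_{e\in E}\pi(\theta,e)$. A full-disclosure policy is a policy $d$ such that, for every $e\in\hat{\mathbf e}(\Theta)$, $e$ is alone in its cell: $d(e')=d(e)$ implies $e'=e$. Such a policy belongs to $\mathcal{D}$. *)

(* Defs.v *)
From HB Require Import structures.
From mathcomp Require Import all_boot all_order all_algebra.
From mathcomp Require Import all_classical all_reals all_analysis.
Set Implicit Arguments. Unset Strict Implicit. Unset Printing Implicit Defensive.
Import Order.TTheory GRing.Theory Num.Theory.
Import numFieldNormedType.Exports.
Local Open Scope classical_set_scope.
Local Open Scope ring_scope.

Section Model.
Variable R : realType.

Definition Eset (ebar : R) : set R := [set x | 0 <= x <= ebar].
Definition Theta (thl thh : R) : set R := [set x | thl <= x <= thh].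

Definition pi_diag (pt : R -> R -> R -> R) (th e : R) : R := pt th e e.

Definition uncurry3 (pt : R -> R -> R -> R) : R * R * R -> R :=
  fun x => pt x.1.1 x.1.2 x.2.

Definition box (thl thh ebar : R) : set (R * R * R) :=
  [set x | Theta thl thh x.1.1 /\ Eset ebar x.1.2 /\ Eset ebar x.2].
Definition open_box (thl thh ebar : R) : set (R * R * R) :=
  [set x | (thl < x.1.1 < thh) /\ (0 < x.1.2 < ebar) /\ (0 < x.2 < ebar)].

Definition coord3 (x : R * R * R) (i : 'I_3) : R :=
  if val i == 0%N then x.1.1 else if val i == 1%N then x.1.2 else x.2.
Definition upd3 (x : R * R * R) (i : 'I_3) (t : R) : R * R * R :=
  if val i == 0%N then (t, x.1.2, x.2)
  else if val i == 1%N then (x.1.1, t, x.2) else (x.1.1, x.1.2, t).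

Definition partial3 (i : 'I_3) (g : R * R * R -> R) (x : R * R * R) : R :=
  derive1 (fun t => g (upd3 x i t)) (coord3 x i).
Definition has_partial3 (i : 'I_3) (g : R * R * R -> R) (x : R * R * R) : Prop :=
  derivable (fun t => g (upd3 x i t)) (coord3 x i) 1.

Definition C2_on (U : set (R * R * R)) (g : R * R * R -> R) : Prop :=
  {within U, continuous g} /\
  (forall i : 'I_3, (forall x, U x -> has_partial3 i g x) /\
     {within U, continuous (partial3 i g)} /\
     forall j : 'I_3, (forall x, U x -> has_partial3 j (partial3 i g) x) /\
       {within U, continuous (partial3 j (partial3 i g))}).

Definition standing_assumptions (ebar thl thh : R) (f : R -> R)
    (pt : R -> R -> R -> R) : Prop :=
  0 < ebar /\ thl < thh /\
   (forall th, Theta thl thh th -> 0 <= f th) /\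
   {within Theta thl thh, continuous f} /\
   (\int[lebesgue_measure]_(th in Theta thl thh) (f th)%:E = 1%E)%E /\
   {within box thl thh ebar, continuous (uncurry3 pt)} /\
   C2_on (open_box thl thh ebar) (uncurry3 pt) /\
   (* strictly increasing in e, strictly decreasing in perceived emission *)
   (forall th e1 e2 et, Theta thl thh th -> Eset ebar e1 -> Eset ebar e2 ->
       Eset ebar et -> e1 < e2 -> pt th e1 et < pt th e2 et) /\
   (forall th e et1 et2, Theta thl thh th -> Eset ebar e -> Eset ebar et1 ->
       Eset ebar et2 -> et1 < et2 -> pt th e et2 < pt th e et1) /\
   (forall th e1 e2 t, Theta thl thh th -> Eset ebar e1 -> Eset ebar e2 ->
       e1 != e2 -> 0 < t < 1 ->
       t * pi_diag pt th e1 + (1 - t) * pi_diag pt th e2 <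
       pi_diag pt th (t * e1 + (1 - t) * e2)) /\
   (forall th, Theta thl thh th -> pi_diag pt th 0 < pi_diag pt th ebar).

Definition is_policy (ebar : R) (d : R -> R) : Prop :=
  forall e, Eset ebar e -> Eset ebar (d e).

Definition Etilde (ebar : R) (d : R -> R) : set R :=
  [set e | Eset ebar e /\ forall e', Eset ebar e' -> d e' = d e -> e' <= e].


Definition maximizer (pt : R -> R -> R -> R) (A : set R) (th e : R) : Prop :=
  A e /\ forall e', A e' -> pi_diag pt th e' <= pi_diag pt th e.

Definition in_D (ebar thl thh : R) (pt : R -> R -> R -> R) (d : R -> R) : Prop :=
  is_policy ebar d /\
  forall th, Theta thl thh th -> exists e, maximizer pt (Etilde ebar d) th e.

Definition pi_d (ebar : R) (pt : R -> R -> R -> R) (d : R -> R) (th : R) : R :=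
  sup [set pi_diag pt th e | e in Etilde ebar d].
Definition gamma_d (ebar : R) (pt : R -> R -> R -> R) (d : R -> R) (th : R) : R :=
  inf [set e | maximizer pt (Etilde ebar d) th e].

Definition Pi (ebar thl thh : R) (f : R -> R) (pt : R -> R -> R -> R)
    (d : R -> R) : \bar R :=
  (\int[lebesgue_measure]_(th in Theta thl thh) (pi_d ebar pt d th * f th)%:E)%E.
Definition Gamma (ebar thl thh : R) (f : R -> R) (pt : R -> R -> R -> R)
    (d : R -> R) : \bar R :=
  (\int[lebesgue_measure]_(th in Theta thl thh) (gamma_d ebar pt d th * f th)%:E)%E.

Definition pareto_efficient (ebar thl thh : R) (f : R -> R)
    (pt : R -> R -> R -> R) (d : R -> R) : Prop :=
  in_D ebar thl thh pt d /\
  ~ exists d', [/\ in_D ebar thl thh pt d',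
      (Pi ebar thl thh f pt d <= Pi ebar thl thh f pt d')%E,
      (Gamma ebar thl thh f pt d' <= Gamma ebar thl thh f pt d)%E &
      ((Pi ebar thl thh f pt d < Pi ebar thl thh f pt d')%E \/
       (Gamma ebar thl thh f pt d' < Gamma ebar thl thh f pt d)%E)].

Definition ehat_image (ebar thl thh : R) (pt : R -> R -> R -> R) : set R :=
  [set e | exists th, Theta thl thh th /\ maximizer pt (Eset ebar) th e].

Definition full_disclosure (ebar thl thh : R) (pt : R -> R -> R -> R)
    (d : R -> R) : Prop :=
  is_policy ebar d /\
  forall e, ehat_image ebar thl thh pt e ->
    forall e', Eset ebar e' -> d e' = d e -> e' = e.

End Model.

(* Main.v *)
Require Import Defs.
From HB Require Import structures.
From mathcomp Require Import all_boot all_order all_algebra.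
From mathcomp Require Import all_classical all_reals all_analysis.
Set Implicit Arguments. Unset Strict Implicit. Unset Printing Implicit Defensive.
Import Order.TTheory GRing.Theory Num.Theory.
Import numFieldNormedType.Exports.
Local Open Scope classical_set_scope.
Local Open Scope ring_scope.
Lemma integral_mono_any d (T : measurableType d) (R : realType)
  (mu : {measure set T -> \bar R}) (D : set T) (f g : T -> \bar R) :
  (forall x, D x -> (f x <= g x)%E) ->
  (\int[mu]_(x in D) f x <= \int[mu]_(x in D) g x)%E.
Proof.
move=> fg; rewrite /integral; apply: leeB; apply: ereal_sup_le.
- move=> _ [h hf <-]; exists h => // x; apply: (le_trans (hf x)).
  rewrite !funeposE /patch; case: ifPn => [/set_mem Dx|_] //.
  rewrite le_max !ge_max lexx andbT.
  have fgx := fg _ Dx; case: (leP 0%E (g x)) => g0; first by rewrite fgx.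
  by rewrite (le_trans fgx (ltW g0)) orbT.
- move=> _ [h hf <-]; exists h => // x; apply: (le_trans (hf x)).
  rewrite !funenegE /patch; case: ifPn => [/set_mem Dx|_] //.
  rewrite le_max !ge_max lexx andbT leeN2 (fg _ Dx) /=.
  case: (leP 0%E (- f x)%E) => f0 //.
  by rewrite (le_trans _ (ltW f0)) ?orbT // leeN2 fg.
Qed.
Lemma exists_max (R : realType) (ebar thl thh : R) pt th : 0 <= ebar ->
  {within box thl thh ebar, continuous (uncurry3 pt)} -> Theta thl thh th ->
  exists e, maximizer pt (Eset ebar) th e.
Proof.
move=> e0 cpt Tth.
have hc : {within `[0, ebar], continuous (pi_diag pt th)}.
  apply/subspace_continuousP => x Ix.
  pose h := fun e : R => (th, e, e).
  have -> : pi_diag pt th = uncurry3 pt \o h by [].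
  have Bh : forall e, e \in `[0, ebar] -> box thl thh ebar (h e).
    move=> e; rewrite in_itv /= => /andP[? ?]; split => //; split; rewrite /Eset /=; apply/andP; split => //.
  move/subspace_continuousP : cpt => /(_ (h x) (Bh x Ix)) cx.
  apply: cvg_comp cx.
  have hx : h @ x --> h x.
    have h1 : (fun e : R => (th, e)) @ x --> (nbhs th, nbhs x).
      by apply: cvg_pair; [exact: cvg_cst|exact: cvg_id].
    have h2 : h @ x --> (nbhs (th, x), nbhs x).
      by apply: cvg_pair; [exact: h1|exact: cvg_id].
    exact: h2.
  move=> P HP /=; rewrite nbhs_filterE.
  have := hx _ HP; rewrite nbhs_filterE /= => H1.
  apply: (filterS _ H1) => e /= Hb Ie.
  by apply: Hb; apply: Bh.
have [c /[!in_itv]/= /andP[c0 ce] cm] := EVT_max e0 hc.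
exists c; split; first by rewrite /Eset /= c0 ce.
by move=> e' /= Ee'; apply: cm; rewrite in_itv.
Qed.

Theorem proposition5 (R : realType) (ebar thl thh : R) (f : R -> R)
    (pt : R -> R -> R -> R) (dF : R -> R) :
  standing_assumptions ebar thl thh f pt ->
  full_disclosure ebar thl thh pt dF ->
  forall d : R -> R, pareto_efficient ebar thl thh f pt d ->
    (Gamma ebar thl thh f pt d <= Gamma ebar thl thh f pt dF)%E.
Proof.
move=> [eb0 [_ [f0 [_ [_ [cpt _]]]]]] [polF fullF] d [Dd nodom].
have emax : forall th, Theta thl thh th -> exists e, maximizer pt (Eset ebar) th e.
  by move=> th Tth; apply: exists_max => //; exact: ltW.
have DF : in_D ebar thl thh pt dF.
  split => // th Tth; have [eh [Eeh ehm]] := emax th Tth.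
  exists eh; split.
    split => // e' Ee' de'.
    by rewrite (fullF eh _ e' Ee' de') //; exists th.
  by move=> e' [Ee' _]; exact: ehm.
have pile : forall th, Theta thl thh th -> pi_d ebar pt d th <= pi_d ebar pt dF th.
  move=> th Tth; have [eh [Eeh ehm]] := emax th Tth.
  have [_ /(_ th Tth) [ed [Ed edm]]] := Dd.
  have [_ /(_ th Tth) [ef [Ef efm]]] := DF.
  apply: (@le_trans _ _ (pi_diag pt th eh)).
    apply: ge_sup; first by exists (pi_diag pt th ed), ed.
    by move=> _ [e [Ee _] <-]; exact: ehm.
  apply: (@le_trans _ _ (pi_diag pt th ef)).
    apply: efm; split => // e' Ee' de'.
    by rewrite (fullF eh _ e' Ee' de') //; exists th.
  apply: ub_le_sup; last by exists ef.
  exists (pi_diag pt th eh) => _ [e [Ee _] <-]; exact: ehm.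
have PiLe : (Pi ebar thl thh f pt d <= Pi ebar thl thh f pt dF)%E.
  apply: integral_mono_any => th Tth; rewrite lee_fin.
  by apply: ler_wpM2r; [exact: f0|exact: pile].
rewrite leNgt; apply/negP => Hlt; apply: nodom.
exists dF; split => //; [exact: ltW|by right].
Qed.
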